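(* Let $\lambda>0$, let $K(\sigma,\tau)=\exp(-\lambda d(\sigma,\tau))$ on $S_n$ with RKHS $\mathcal H$ and feature map $\phi:S_n\to\mathcal H$ (so $\langle\phi(\sigma),\phi(\tau)\rangle_{\mathcal H}=K(\sigma,\tau)$). Let $R\subseteq S_n$ be a top-$k$ partial ranking, $p$ the uniform distribution on $R$, and $\mu_p=\frac1{|R|}\sum_{\sigma\in R}\phi(\sigma)$. Then for every $\sigma_1\in R$, the function $$\sigma_2\mapsto\Big\|\mu_p-\tfrac12\big(\phi(\sigma_1)+\phi(\sigma_2)\big)\Big\|_{\mathcal H}^2,\qquad\sigma_2\in R,$$ has a unique minimiser over $R$, namely $\sigma_2=A_R(\sigma_1)$. That is, the second step of kernel herding for $p$ started from any $\sigma_1\in R$ produces exactly the antithetic sample of $\sigma_1$.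
   Context: $S_n$ is the symmetric group on $[n]$; $\sigma\in S_n$ is identified with the full ranking $\sigma(1)\succ\cdots\succ\sigma(n)$. For distinct items $x,y$, $\{x,y\}$ is discordant for $\sigma,\tau$ if $(\sigma^{-1}(x)-\sigma^{-1}(y))(\tau^{-1}(x)-\tau^{-1}(y))<0$. The Kendall distance $d(\sigma,\tau)$ is the number of unordered discordant pairs; $K$ is a positive definite kernel. For $0\le k\le n$ and distinct $a_1,\dots,a_k\in[n]$, the top-$k$ partial ranking is the set $R=\{\sigma\in S_n:\sigma(i)=a_i,\ i\le k\}$. The antithetic operator $A_R:R\to R$ is $A_R(\sigma)(i)=a_i$ for $i\le k$ and $A_R(\sigma)(k+j)=\sigma(n+1-j)$ for $j=1,\dots,n-k$. *)

(* Defs.v *)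
From mathcomp Require Import all_boot all_order all_fingroup.
From Stdlib Require Import Reals.
Set Implicit Arguments. Unset Strict Implicit. Unset Printing Implicit Defensive.

(* Rankings: sigma : {perm 'I_n}; position i (0-indexed) holds item sigma i.
   sigma^-1 x is the position of item x. *)

Definition discordant n (s t : {perm 'I_n}) (x y : 'I_n) : bool :=
  ((s^-1)%g x < (s^-1)%g y) && ((t^-1)%g y < (t^-1)%g x)
  || ((s^-1)%g y < (s^-1)%g x) && ((t^-1)%g x < (t^-1)%g y).

Definition kendall n (s t : {perm 'I_n}) : nat :=
  #|[set p : 'I_n * 'I_n | (p.1 < p.2) && discordant s t p.1 p.2]|.

Definition mallowsK (lam : R) n (s t : {perm 'I_n}) : R :=
  exp (- lam * INR (kendall s t)).

(* Squared RKHS norm of the finite combination sum_s c(s) phi(s):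
   ||sum_s c s phi s||^2 = sum_{s,t} c s c t K(s,t). *)
Definition rkhs_norm2 n (K : {perm 'I_n} -> {perm 'I_n} -> R)
  (c : {perm 'I_n} -> R) : R :=
  \big[Rplus/0%R]_(s : {perm 'I_n}) \big[Rplus/0%R]_(t : {perm 'I_n})
     (c s * c t * K s t)%R.

(* Top-k partial ranking given by the sequence a = [a_1;...;a_k] (k = size a):
   R = {sigma | sigma(i) = a_i for i <= k} (0-indexed: positions i < size a). *)
Definition topk n (a : seq 'I_n) : {set {perm 'I_n}} :=
  [set s : {perm 'I_n} | [forall i : 'I_n, (i < size a) ==> (s i == nth i a i)]].

(* Antithetic operator A_R, as a function on positions (0-indexed):
   A(s)(p) = a_p if p < k, and s(n-1+k-p) otherwise
   (this is A(s)(k+j) = s(n+1-j) in 1-indexed notation). *)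
Definition antithetic n (a : seq 'I_n) (s : {perm 'I_n}) (p : 'I_n) : 'I_n :=
  if p < size a then nth p a p else s (insubd p (n.-1 + size a - p)).

(* Coefficients of mu_p - 1/2 (phi s1 + phi s2), p uniform on A *)
Definition herd_coef n (A : {set {perm 'I_n}}) (s1 s2 : {perm 'I_n})
  (s : {perm 'I_n}) : R :=
  ((if s \in A then / INR #|A| else 0)
   - / 2 * (if s == s1 then 1 else 0) - / 2 * (if s == s2 then 1 else 0))%R.

Definition herding2 (lam : R) n (A : {set {perm 'I_n}}) (s1 s2 : {perm 'I_n}) : R :=
  rkhs_norm2 (@mallowsK lam n) (herd_coef A s1 s2).

(* Main.v *)
Require Import Defs.
From mathcomp Require Import all_boot all_order all_fingroup all_algebra.
From Stdlib Require Import Reals.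
From mathcomp Require Import Rstruct.
From mathcomp Require Import ring lra zify.
Set Implicit Arguments. Unset Strict Implicit. Unset Printing Implicit Defensive.
Import GRing.Theory Num.Theory.


Section Comb.
Variables (n : nat) (a : seq 'I_n).
Local Notation k := (size a).
Local Notation A := (topk a).
Implicit Types (s t g : {perm 'I_n}) (x y : 'I_n).

Lemma topkP s : s \in A -> forall i : 'I_n, i < k -> s i = nth i a i.
Proof. by rewrite inE => /forallP H i Hi; apply/eqP; exact: (implyP (H i) Hi). Qed.

Lemma topk_same s t x : s \in A -> t \in A -> (s^-1)%g x < k -> (t^-1)%g x = (s^-1)%g x.
Proof.
move=> sA tA Hx.
have: t ((s^-1)%g x) = x by rewrite (topkP tA Hx) -(topkP sA Hx) permKV.
by move=> E; rewrite -{1}E permK.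
Qed.

Lemma disc_sym_xy s t x y : discordant s t x y = discordant s t y x.
Proof. by rewrite /discordant orbC. Qed.

Lemma disc_sym_st s t x y : discordant s t x y = discordant t s x y.
Proof. by rewrite /discordant [X in X || _]andbC [X in _ || X]andbC orbC. Qed.

Lemma disc_irr s t x : discordant s t x x = false.
Proof. by rewrite /discordant ltnn. Qed.

Lemma disc_mul s t g x y :
  discordant (s * g)%g (t * g)%g x y = discordant s t ((g^-1)%g x) ((g^-1)%g y).
Proof. by rewrite /discordant !invMg !permM. Qed.

Lemma disc_bottom s t x y : s \in A -> t \in A -> discordant s t x y ->
  k <= (s^-1)%g x /\ k <= (s^-1)%g y.
Proof.
move=> sA tA.
have H1 : forall x y, (s^-1)%g x < k -> discordant s t x y = false.
  move=> x' y' Hx; rewrite /discordant (topk_same sA tA Hx).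
  case: (ltnP ((s^-1)%g y') k) => Hy.
    by rewrite (topk_same sA tA Hy); lia.
  have Hy' : k <= (t^-1)%g y'.
    case: (ltnP ((t^-1)%g y') k) => // Hy2.
    by move: Hy; rewrite (topk_same tA sA Hy2); lia.
  lia.
move=> D; split.
  by case: (ltnP ((s^-1)%g x) k) => // Hx; rewrite H1 in D.
case: (ltnP ((s^-1)%g y) k) => // Hy.
by rewrite disc_sym_xy H1 in D.
Qed.

Definition Dset s t := [set p : 'I_n * 'I_n | (p.1 < p.2) && discordant s t p.1 p.2].

Lemma kendall_sym s t : kendall s t = kendall t s.
Proof. by rewrite /kendall; apply: eq_card => p; rewrite !inE disc_sym_st. Qed.

Lemma kendall_ss s : kendall s s = 0.
Proof.
rewrite /kendall; apply/eqP; rewrite cards_eq0; apply/eqP/setP => p.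
by rewrite !inE /discordant; apply/negbTE; lia.
Qed.

Lemma kendall_double s t :
  #|[set p : 'I_n * 'I_n | discordant s t p.1 p.2]| = kendall s t + kendall s t.
Proof.
set D1 := [set p : 'I_n * 'I_n | (p.1 < p.2) && discordant s t p.1 p.2].
have sw : injective (fun p : 'I_n * 'I_n => (p.2, p.1)) by move=> [? ?] [? ?] [-> ->].
have -> : [set p : 'I_n * 'I_n | discordant s t p.1 p.2] =
   D1 :|: (fun p : 'I_n * 'I_n => (p.2, p.1)) @^-1: D1.
  apply/setP => [[x y]]; rewrite !inE /=.
  case: (ltngtP x y) => H.
  - by rewrite orbF.
  - by rewrite disc_sym_xy.
  - have E : x = y by apply: val_inj. rewrite -E disc_irr; by case: (x < x). 
rewrite cardsU card_preimset //.
have -> : D1 :&: (fun p : 'I_n * 'I_n => (p.2, p.1)) @^-1: D1 = set0.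
  apply/setP => [[x y]]; rewrite !inE /=; apply/negbTE; lia.
by rewrite cards0 subn0.
Qed.

Lemma kendall_mul s t g : kendall (s * g)%g (t * g)%g = kendall s t.
Proof.
suff: kendall (s * g)%g (t * g)%g + kendall (s * g)%g (t * g)%g =
      kendall s t + kendall s t by lia.
rewrite -!kendall_double.
have inj : injective (fun p : 'I_n * 'I_n => (g p.1, g p.2)).
  by move=> [? ?] [? ?] [/perm_inj -> /perm_inj ->].
rewrite -(card_preimset _ inj); apply: eq_card => p.
by rewrite !inE disc_mul /= !permK.
Qed.

Lemma topk_mul s g : s \in A -> (forall i : 'I_n, i < k -> g (nth i a i) = nth i a i) ->
  (s * g)%g \in A.
Proof.
move=> sA Hg; rewrite inE; apply/forallP => i; apply/implyP => Hi.
by rewrite permM (topkP sA Hi) Hg.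
Qed.

Definition rf (p : 'I_n) : 'I_n := if p < k then p else insubd p (n.-1 + k - p).

Lemma rf_val (p : 'I_n) : val (rf p) = if p < k then val p else n.-1 + k - p.
Proof.
rewrite /rf; case: ifP => // H; rewrite val_insubd.
have := ltn_ord p; case: ifP => //; lia.
Qed.

Lemma rf_inj : injective rf.
Proof.
move=> p q E; have := congr1 val E; rewrite !rf_val => E'.
apply: val_inj => /=; have := ltn_ord p; have := ltn_ord q.
move: E'; case: (ltnP p k) => Hp; case: (ltnP q k) => Hq /=; lia.
Qed.

Definition anti s := (perm rf_inj * s)%g.

Lemma anti_val s p : anti s p = s (rf p).
Proof. by rewrite /anti permM permE. Qed.

Lemma anti_topk s : s \in A -> anti s \in A.
Proof.
move=> sA; rewrite inE; apply/forallP => i; apply/implyP => Hi.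
by rewrite anti_val /rf Hi (topkP sA Hi).
Qed.

Lemma anti_antithetic s : s \in A -> forall p, anti s p = antithetic a s p.
Proof.
move=> sA p; rewrite anti_val /rf /antithetic.
by case: ifP => // Hp; rewrite (topkP sA Hp).
Qed.

Definition Bset s := [set p : 'I_n * 'I_n |
   (p.1 < p.2) && (k <= (s^-1)%g p.1) && (k <= (s^-1)%g p.2)].

Lemma D_sub s t : s \in A -> t \in A -> Dset s t \subset Bset s.
Proof.
move=> sA tA; apply/subsetP => [[x y]]; rewrite !inE /= => /andP [H1 H2].
by have [? ?] := disc_bottom sA tA H2; rewrite H1; apply/andP.
Qed.

Lemma D_anti s : s \in A -> Dset s (anti s) = Bset s.
Proof.
move=> sA; apply/setP => [[x y]]; rewrite !inE /=.
set i := ((anti s)^-1)%g x; set j := ((anti s)^-1)%g y.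
have Ex : (s^-1)%g x = rf i.
  by rewrite -{1}(permKV (anti s) x) -/i anti_val permK.
have Ey : (s^-1)%g y = rf j.
  by rewrite -{1}(permKV (anti s) y) -/j anti_val permK.
have Hij : (x < y) -> val i != val j.
  move=> Hxy; apply/negP => /eqP /val_inj Eij.
  have : x = y by rewrite -(permKV (anti s) x) -(permKV (anti s) y) -/i -/j Eij.
  by move=> E; rewrite E ltnn in Hxy.
rewrite /discordant -/i -/j Ex Ey !rf_val.
have := ltn_ord i; have := ltn_ord j.
case: (ltnP x y) => Hxy; last by rewrite !andFb.
have := Hij Hxy.
case: (ltnP i k) => Hi; case: (ltnP j k) => Hj /=; lia.
Qed.

Lemma nat_rev (f : nat -> nat) (m N : nat) :
  (forall q, m <= q < N -> m <= f q < N) ->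
  (forall q q', m <= q -> q < q' -> q' < N -> f q' < f q) ->
  forall p, m <= p < N -> f p = N.-1 + m - p.
Proof.
move=> Hb Hd.
have lo : forall d, m + d < N -> m + d <= f (N.-1 - d).
  elim=> [|d IH] H.
    rewrite addn0 subn0; have := Hb N.-1; lia.
  have := IH ltac:(lia); have := Hd (N.-1 - d.+1) (N.-1 - d); lia.
have up : forall d, m + d < N -> f (m + d) <= N.-1 - d.
  elim=> [|d IH] H.
    have := Hb m; rewrite addn0; lia.
  have := IH ltac:(lia); have := Hd (m + d) (m + d.+1); lia.
move=> p Hp.
have := lo (N.-1 - p) ltac:(lia); have := up (p - m) ltac:(lia).
have -> : m + (p - m) = p by lia.
have -> : N.-1 - (N.-1 - p) = p by lia.
lia.
Qed.

Lemma uniq_anti s t : s \in A -> t \in A -> Dset s t = Bset s ->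
  forall p, t p = anti s p.
Proof.
move=> sA tA E p; rewrite anti_val.
case: (ltnP p k) => Hp.
  by rewrite /rf Hp (topkP sA Hp) (topkP tA Hp).
pose f q := val ((s^-1)%g (t (insubd p q))).
have fv : forall q : 'I_n, f q = (s^-1)%g (t q).
  by move=> q; rewrite /f; congr (val ((s^-1)%g (t _))); apply: val_inj; rewrite val_insubd ltn_ord.
have Hb : forall q, k <= q < n -> k <= f q < n.
  move=> q /andP [H1 H2].
  have -> : q = val (Ordinal H2) by []. rewrite fv ltn_ord andbT.
  case: (ltnP ((s^-1)%g (t (Ordinal H2))) k) => // H.
  have := topk_same sA tA H; rewrite permK => E'; rewrite -E' /= in H; lia.
have Hd : forall q q', k <= q -> q < q' -> q' < n -> f q' < f q.
  move=> q q' H1 H2 H3.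
  have H4 : q < n by lia.
  set x := t (Ordinal H4); set y := t (Ordinal H3).
  have fq : f q = (s^-1)%g x := fv (Ordinal H4).
  have fq' : f q' = (s^-1)%g y := fv (Ordinal H3).
  rewrite fq fq'.
  have bx : k <= (s^-1)%g x.
    have := Hb q; rewrite fq; lia.
  have by' : k <= (s^-1)%g y.
    have := Hb q'; rewrite fq'; lia.
  have dxy : discordant s t x y.
    case: (ltngtP x y) => Hxy.
    - have : (x, y) \in Bset s by rewrite inE /= Hxy bx by'.
      by rewrite -E inE /= => /andP [].
    - have : (y, x) \in Bset s by rewrite inE /= Hxy bx by'.
      by rewrite -E inE /= disc_sym_xy => /andP [].
    - have : x = y by apply: val_inj.
      move/perm_inj => /(congr1 val) /=; lia.
  move: dxy; rewrite /discordant /x /y !permK /=; lia.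
have := nat_rev Hb Hd (p := p); rewrite fv => H.
have : (s^-1)%g (t p) = rf p.
  apply: val_inj; rewrite rf_val ltnNge Hp /= H //; have := ltn_ord p; lia.
by move=> <-; rewrite permKV.
Qed.

Lemma kendall_le s t : s \in A -> t \in A -> kendall s t <= kendall s (anti s).
Proof.
move=> sA tA; rewrite /kendall -/(Dset s t) -/(Dset s (anti s)) D_anti //.
exact: subset_leq_card (D_sub sA tA).
Qed.

Lemma kendall_eq s t : s \in A -> t \in A -> kendall s (anti s) <= kendall s t ->
  forall p, t p = anti s p.
Proof.
move=> sA tA H; apply: uniq_anti => //; apply/eqP.
rewrite eqEcard D_sub //=; move: H.
by rewrite /kendall -/(Dset s t) -/(Dset s (anti s)) D_anti.
Qed.

End Comb.


Section Ana.
Local Open Scope ring_scope.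
Variables (n : nat).
Implicit Types (s t : {perm 'I_n}) (A : {set {perm 'I_n}}).

Lemma sum_delta (F : {perm 'I_n} -> R) s0 :
  \sum_t ((if t == s0 then 1 else 0) * F t) = F s0.
Proof.
rewrite (bigD1 s0) //= eqxx mul1r big1 ?addr0 // => t /negbTE ->; by rewrite mul0r.
Qed.

Lemma sum_coef A s1 s2 (F : {perm 'I_n} -> R) :
  \sum_t (herd_coef A s1 s2 t * F t) =
  (#|A|%:R)^-1 * \sum_(t in A) F t - 2^-1 * F s1 - 2^-1 * F s2.
Proof.
rewrite /herd_coef.
under eq_bigr => t _ do rewrite !RealsE /= !mulrBl.
rewrite !sumrB mulr_sumr.
congr (_ - _ - _).
- by rewrite [RHS]big_mkcond; apply: eq_bigr => t _; case: ifP => _; rewrite ?mul0r.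
- by rewrite -(sum_delta F s1) mulr_sumr; apply: eq_bigr => t _; rewrite mulrA.
- by rewrite -(sum_delta F s2) mulr_sumr; apply: eq_bigr => t _; rewrite mulrA.
Qed.

Variable lam : R.
Local Notation K := (@mallowsK lam n).

Lemma K_sym s t : K s t = K t s.
Proof. by rewrite /mallowsK kendall_sym. Qed.

Lemma K_ss s : K s s = 1.
Proof. by rewrite /mallowsK kendall_ss /= Rmult_0_r exp_0. Qed.

Lemma herd_val A s1 s2 : s1 \in A ->
  \sum_(s in A) K s s2 = \sum_(s in A) K s s1 ->
  herding2 lam A s1 s2 =
   (#|A|%:R)^-1 * ((#|A|%:R)^-1 * \sum_(s in A) \sum_(t in A) K s t - \sum_(s in A) K s s1)
   - (#|A|%:R)^-1 * \sum_(s in A) K s s1 + 2^-1 + 2^-1 * K s1 s2.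
Proof.
move=> s1A HM.
rewrite /herding2 /rkhs_norm2.
have -> : \big[Rplus/0%R]_s \big[Rplus/0%R]_t
     (herd_coef A s1 s2 s * herd_coef A s1 s2 t * K s t)%R =
   \sum_s herd_coef A s1 s2 s * (\sum_t herd_coef A s1 s2 t * K s t).
  apply: eq_bigr => s _; rewrite mulr_sumr; apply: eq_bigr => t _.
  by rewrite !RealsE mulrA.
under eq_bigr => s _ do rewrite sum_coef.
rewrite sum_coef.
rewrite !sumrB -!mulr_sumr HM !K_ss.
have E : forall x, \sum_(t in A) K x t = \sum_(s in A) K s x.
  by move=> x; apply: eq_bigr => t _; rewrite K_sym.
rewrite !E HM (K_sym s2 s1).
field.
by rewrite pnatr_eq0 -lt0n; apply/card_gt0P; exists s1.
Qed.
End Ana.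

Lemma expK_le (lam : R) (x y : nat) : (0 < lam)%R ->
  (exp (- lam * INR x) <= exp (- lam * INR y))%R <-> (y <= x)%N.
Proof.
move=> Hl; split => H.
  case: (leqP y x) => // Hxy; exfalso.
  have Hi : (INR x < INR y)%R by apply: lt_INR; apply/ltP.
  have : (exp (- lam * INR y) < exp (- lam * INR x))%R.
    apply: exp_increasing; apply/RltP; move/RltP: Hi; move/RltP: Hl.
    rewrite !RealsE => Hl' Hi'; nra.
  move/RltP => H2; move/RleP: H => H3; lra.
have Hi : (INR y <= INR x)%R by apply: le_INR; apply/leP.
case: (Rle_lt_or_eq_dec _ _ Hi) => Hc.
  apply: Rlt_le; apply: exp_increasing; apply/RltP; move/RltP: Hc; move/RltP: Hl.
  rewrite !RealsE => Hl' Hi'; nra.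
by rewrite Hc; apply: Rle_refl.
Qed.

Section Shift.
Local Open Scope ring_scope.
Lemma sum_shift (lam : R) n (a : seq 'I_n) s1 s2 : s1 \in topk a -> s2 \in topk a ->
  \sum_(s in topk a) @mallowsK lam n s s2 = \sum_(s in topk a) @mallowsK lam n s s1.
Proof.
move=> s1A s2A.
set g := (s1^-1 * s2)%g.
have fix1 : forall i : 'I_n, (i < size a)%nat -> g (nth i a i) = nth i a i.
  move=> i Hi; by rewrite permM -(topkP s1A Hi) permK (topkP s2A Hi) (topkP s1A Hi).
have fix2 : forall i : 'I_n, (i < size a)%nat -> (g^-1)%g (nth i a i) = nth i a i.
  move=> i Hi; by rewrite -{1}(fix1 i Hi) permK //.
rewrite (reindex_inj (mulIg g)) /=.
apply: eq_big => s.
  apply/idP/idP => H.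
    by have := topk_mul H fix2; rewrite -mulgA mulgV mulg1.
  exact: topk_mul H fix1.
move=> _; have -> : s2 = (s1 * g)%g by rewrite /g mulgA mulgV mul1g.
by rewrite /mallowsK kendall_mul.
Qed.
End Shift.

Theorem theorem6 (lam : R) (n : nat) (a : seq 'I_n) :
  (0 < lam)%R -> uniq a ->
  forall s1 : {perm 'I_n}, s1 \in topk a ->
  (exists2 s2 : {perm 'I_n}, s2 \in topk a & forall p, s2 p = antithetic a s1 p) /\
  (forall s2 : {perm 'I_n}, s2 \in topk a ->
     ((forall t : {perm 'I_n}, t \in topk a ->
         (herding2 lam (topk a) s1 s2 <= herding2 lam (topk a) s1 t)%R)
      <-> (forall p, s2 p = antithetic a s1 p))).
Proof.
move=> Hl _ s1 s1A; split.
  by exists (anti a s1); [exact: anti_topk | exact: anti_antithetic].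
move=> s2 s2A.
have key : forall t, t \in topk a ->
   ((herding2 lam (topk a) s1 s2 <= herding2 lam (topk a) s1 t)%R <->
    (kendall s1 t <= kendall s1 s2)%N).
  move=> t tA.
  rewrite (herd_val s1A (sum_shift lam s1A s2A)) (herd_val s1A (sum_shift lam s1A tA)).
  rewrite -(expK_le _ _ Hl) /mallowsK.
  split => H; apply/RleP; move/RleP: H; lra.
split.
  move=> H p; rewrite -anti_antithetic //.
  apply: kendall_eq => //.
  by apply/key => //; [exact: anti_topk | apply: H; exact: anti_topk].
move=> Hp t tA; apply/key => //.
have -> : s2 = anti a s1 by apply/permP => p; rewrite Hp anti_antithetic.
exact: kendall_le.
Qed.
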